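(* In the setting described in the context with all transition matrices symmetric (so all canonical tuples are real), fix $r$ and $k$, fix $\Lambda_{r}^{(d)}$ and all columns of $U_{r}^{(d)}\in\mathbb{R}^{m\times n}$ except the $k$-th. Let $[U_r^{(d)}]_{-k}\in\mathbb{R}^{m\times(n-1)}$ be $U_r^{(d)}$ with its $k$-th column removed, and let $W\in\mathbb{R}^{m\times(m-n+1)}$ have orthonormal columns spanning the orthogonal complement of the column space of $[U_r^{(d)}]_{-k}$. If $u\in\mathbb{R}^{m-n+1}$ is a unit eigenvector of $W^{\mathrm T}S_{r,k}W$ for its smallest eigenvalue, then $Wu$ is an optimal choice of the $k$-th column $[U_r^{(d)}]_k$ for the problem of minimizing $[U_r^{(d)}]_k^{\mathrm T}S_{r,k}[U_r^{(d)}]_k$ subject to $(U_r^{(d)})^{\mathrm T}U_r^{(d)}=I_n$.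
   Context: A system tuple $(A,C)$ has $A\in\mathbb{R}^{n\times n}$ strictly stable and $C\in\mathbb{R}^{m\times n}$ with $C^{\mathrm T}C=I_n$. For symmetric $A$ a canonical tuple is $(\Lambda,U)$ with $\Lambda=P^{\mathrm T}AP$ diagonal, $U=CP$, $P$ orthogonal. Data systems $X_1,\dots,X_N$ have canonical tuples $(\Lambda_i^{(x)},U_i^{(x)})$; dictionary atoms $D_1,\dots,D_J$ have canonical tuples $(\Lambda_j^{(d)},U_j^{(d)})$; $z_{j,i}$ are real codes. Notation: $[X]_k$ is the $k$-th column of $X$, or the $k$-th diagonal entry if $X$ is diagonal. For $\lambda$ and diagonal $\Lambda$ with entries $\lambda_1,\dots,\lambda_n$, $E(\lambda,\Lambda)=\mathrm{diag}\Big(\frac{(1-|\lambda|^2)(1-|\lambda_l|^2)}{|1-\lambda\lambda_l^{*}|^2}\Big)_{l=1}^n$. Set $F_{r,j,k}=U_j^{(d)}E([\Lambda_r^{(d)}]_k,\Lambda_j^{(d)})(U_j^{(d)})^{\mathrm T}$, $F'_{r,i,k}=U_i^{(x)}E([\Lambda_r^{(d)}]_k,\Lambda_i^{(x)})(U_i^{(x)})^{\mathrm T}$, and $S_{r,k}=\sum_{i=1}^N z_{r,i}\big(\sum_{j\ne r}z_{j,i}F_{r,j,k}-F'_{r,i,k}\big)$ (an $m\times m$ real matrix). *)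

(* Defs.v *)
From HB Require Import structures.
From mathcomp Require Import all_boot all_order all_algebra.
Set Implicit Arguments. Unset Strict Implicit. Unset Printing Implicit Defensive.
Import Order.TTheory GRing.Theory Num.Theory.
Local Open Scope ring_scope.

Section Defs.
Variable R : rcfType.

Definition strictly_stable n (A : 'M[R]_n) : Prop :=
  forall a : R, eigenvalue A a -> `|a| < 1.

(* (Lam, U) is a canonical tuple of some system tuple (A, C) with A symmetric
   strictly stable, C^T C = I_n : Lam = P^T A P diagonal (stored as the row
   vector of its diagonal entries), U = C P, P orthogonal. *)
Definition canonical_tuple m n (Lam : 'rV[R]_n) (U : 'M[R]_(m, n)) : Prop :=
  exists (A : 'M[R]_n) (C : 'M[R]_(m, n)) (P : 'M[R]_n),
    [/\ A^T = A, strictly_stable A, C^T *m C = 1%:M,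
        P^T *m P = 1%:M & P^T *m A *m P = diag_mx Lam] /\ U = C *m P.

Definition Emx n (lam : R) (Lam : 'rV[R]_n) : 'M[R]_n :=
  diag_mx (\row_l ((1 - lam ^+ 2) * (1 - Lam 0 l ^+ 2) / (1 - lam * Lam 0 l) ^+ 2)).

Definition Fmx m n (lam : R) (Lam : 'rV[R]_n) (U : 'M[R]_(m, n)) : 'M[R]_m :=
  U *m Emx lam Lam *m U^T.

Definition Smx m n J N (Ld : 'I_J -> 'rV[R]_n) (Ud : 'I_J -> 'M[R]_(m, n))
  (Lx : 'I_N -> 'rV[R]_n) (Ux : 'I_N -> 'M[R]_(m, n)) (z : 'I_J -> 'I_N -> R)
  (r : 'I_J) (k : 'I_n) : 'M[R]_m :=
  \sum_(i < N) z r i *: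
     (\sum_(j < J | j != r) z j i *: Fmx (Ld r 0 k) (Ld j) (Ud j)
      - Fmx (Ld r 0 k) (Lx i) (Ux i)).

Definition replace_col m n (U : 'M[R]_(m, n)) (k : 'I_n) (x : 'cV[R]_m) : 'M[R]_(m, n) :=
  \matrix_(i, j) if j == k then x i 0 else U i j.

Definition quadf m (S : 'M[R]_m) (x : 'cV[R]_m) : R := (x^T *m S *m x) 0 0.
End Defs.

(* Main.v *)
Require Import Defs.
From HB Require Import structures.
From mathcomp Require Import all_boot all_order all_algebra.
From mathcomp Require Import complex.
Import Order.TTheory GRing.Theory Num.Theory.
Local Open Scope ring_scope.

Section Helpers.
Local Open Scope sesquilinear_scope.

Lemma realC (R : rcfType) (a : R) : (real_complex R a) \is Num.real.
Proof. by rewrite complex_real. Qed.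

Lemma psd_min (R : rcfType) p (M : 'M[R]_p) (lam : R) :
  M^T = M -> (forall mu, eigenvalue M mu -> lam <= mu) ->
  forall y : 'cV[R]_p, lam * (y^T *m y) 0 0 <= (y^T *m M *m y) 0 0.
Proof.
move=> Msym Hev y.
pose f := real_complex R.
pose A := map_mx f M.
have Aherm : A \is hermsymmx.
  apply/is_hermitianmxP; rewrite expr0 scale1r; apply/matrixP=> i j.
  have Mji : M j i = M i j by rewrite -{1}Msym mxE.
  rewrite !mxE Mji conj_Creal //; exact: realC.
pose P := spectralmx A; pose d := spectral_diag A.
have Punit : P \is unitarymx := spectral_unitarymx A.
have AE : A = invmx P *m diag_mx d *m P.
  exact/orthomx_spectralP/hermitian_normalmx.
rewrite invmx_unitary // in AE.
have dreal := hermitian_spectral_diag_real Aherm.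
have PP : P *m P^t* = 1%:M by apply/unitarymxP.
have PP' : P^t* *m P = 1%:M.
  by rewrite -invmx_unitary // mulVmx // unitarymx_unit.
have Hd : forall i, f lam <= d 0 i.
  move=> i; have : eigenvalue A (d 0 i).
    apply/eigenvalueP; exists (row i P).
      rewrite -row_mul AE !mulmxA PP mul1mx row_mul row_diag_mx.
      by rewrite -scalemxAl -rowE.
    apply/negP=> /eqP H0.
    have : row i (P *m P^t*) = 0 by rewrite row_mul H0 mul0mx.
    by rewrite PP => /rowP/(_ i); rewrite !mxE eqxx /= => /eqP; rewrite oner_eq0.
  rewrite eigenvalue_root_char -map_char_poly.
  have dr : d 0 i \is Num.real := mxOverP dreal 0 i.
  rewrite -(RRe_real dr) fmorph_root -eigenvalue_root_char => /Hev.
  by rewrite -lecR.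
pose yc := (y^T) ^ f.
pose w := yc *m P^t*.
have yfE : y ^ f = yc^t*.
  by apply/matrixP=> i j; rewrite !mxE conj_Creal // realC.
have wtE : w^t* = P *m yc^t* by rewrite /w trmx_mul map_mxM trmxCK.
have C1 : (y^T *m M *m y) ^ f = w *m diag_mx d *m w^t*.
  by rewrite !map_mxM -/A -/yc yfE AE wtE !mulmxA.
have C2 : (y^T *m y) ^ f = w *m w^t*.
  by rewrite !map_mxM -/yc yfE wtE mulmxA -[yc *m _ *m P]mulmxA PP' mulmx1.
rewrite -lecR rmorphM /=.
have E1 : ((y^T *m M *m y) 0 0)%:C%C = ((y^T *m M *m y) ^ f) 0 0 by rewrite [RHS]mxE.
have E2 : ((y^T *m y) 0 0)%:C%C = ((y^T *m y) ^ f) 0 0 by rewrite [RHS]mxE.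
rewrite E1 E2 C1 C2 mul_mx_diag; clearbody w.
rewrite [X in _ <= X]mxE [X in _ * X]mxE mulr_sumr; apply: ler_sum => j _.
rewrite !mxE [X in _ <= X]mulrAC [X in _ <= X]mulrC.
by apply: ler_wpM2r; [exact: mul_conjC_ge0 | exact: Hd].
Qed.

End Helpers.

Lemma canon_orth (R : rcfType) m n (Lam : 'rV[R]_n) (U : 'M[R]_(m, n)) :
  canonical_tuple Lam U -> U^T *m U = 1%:M.
Proof.
case=> A [C [P [[_ _ hC hP _] ->]]].
by rewrite trmx_mul mulmxA -(mulmxA P^T) hC mulmx1 hP.
Qed.

Lemma col_replace (R : rcfType) m n (U : 'M[R]_(m, n)) k x j :
  col j (replace_col U k x) = if j == k then x else col j U.
Proof. by apply/colP=> i; rewrite !mxE; case: eqP => // _; rewrite mxE. Qed.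

Lemma tAA_entry (R : rcfType) m n (A : 'M[R]_(m, n)) i j :
  (A^T *m A) i j = ((col i A)^T *m col j A) 0 0.
Proof. by rewrite !mxE; apply: eq_bigr => l _; rewrite !mxE. Qed.

Lemma Fmx_sym (R : rcfType) m n (l : R) (Lam : 'rV[R]_n) (U : 'M[R]_(m, n)) :
  (Fmx l Lam U)^T = Fmx l Lam U.
Proof. by rewrite /Fmx /Emx !trmx_mul trmxK tr_diag_mx mulmxA. Qed.

Lemma Smx_sym (R : rcfType) m n J N Ld Ud Lx Ux z r k :
  (@Smx R m n J N Ld Ud Lx Ux z r k)^T = Smx Ld Ud Lx Ux z r k.
Proof.
rewrite /Smx linear_sum; apply: eq_bigr => i _.
rewrite linearZ linearB linear_sum /= Fmx_sym; congr (_ *: (_ - _)).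
by apply: eq_bigr => j _; rewrite linearZ /= Fmx_sym.
Qed.

Theorem theorem3 (R : rcfType) (m n J N : nat)
  (Ld : 'I_J -> 'rV[R]_n) (Ud : 'I_J -> 'M[R]_(m, n))
  (Lx : 'I_N -> 'rV[R]_n) (Ux : 'I_N -> 'M[R]_(m, n))
  (z : 'I_J -> 'I_N -> R) (r : 'I_J) (k : 'I_n)
  (W : 'M[R]_(m, (m - n).+1)) (u : 'cV[R]_((m - n).+1)) (lam : R) :
  (n <= m)%N ->
  (forall j, canonical_tuple (Ld j) (Ud j)) ->
  (forall i, canonical_tuple (Lx i) (Ux i)) ->
  (* W has orthonormal columns spanning the orthogonal complement of the
     column space of [U_r^(d)]_{-k} *)
  W^T *m W = 1%:M ->
  (forall x : 'cV[R]_m,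
      (exists y : 'cV[R]_((m - n).+1), x = W *m y) <->
      (forall j : 'I_n, j != k -> (col j (Ud r))^T *m x = 0)) ->
  let S := Smx Ld Ud Lx Ux z r k in
  let M := W^T *m S *m W in
  (* u is a unit eigenvector of W^T S W for its smallest eigenvalue lam *)
  u^T *m u = 1%:M ->
  M *m u = lam *: u ->
  (forall mu : R, eigenvalue M mu -> lam <= mu) ->
  (* W u is an optimal choice of the k-th column *)
  let U' := replace_col (Ud r) k (W *m u) in
  U'^T *m U' = 1%:M /\
  (forall x : 'cV[R]_m,
      (replace_col (Ud r) k x)^T *m replace_col (Ud r) k x = 1%:M ->
      quadf S (W *m u) <= quadf S x).
Proof.
Proof.
move=> hnm hLd hLx hW hspan S M hu hMu hmin U'.
have hU : (Ud r)^T *m Ud r = 1%:M by apply: canon_orth (hLd r).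
have orth : forall x, (exists y, x = W *m y) ->
    forall j, j != k -> (col j (Ud r))^T *m x = 0 := fun x h => (hspan x).1 h.
have qW : forall y, quadf S (W *m y) = (y^T *m M *m y) 0 0.
  by move=> y; rewrite /quadf /M trmx_mul !mulmxA.
have Ssym : S^T = S by apply: Smx_sym.
have Msym : M^T = M by rewrite /M !trmx_mul trmxK Ssym !mulmxA.
have WuWu : (W *m u)^T *m (W *m u) = 1%:M.
  by rewrite trmx_mul mulmxA -(mulmxA _ W^T) hW mulmx1 hu.
split.
  apply/matrixP => i j; rewrite /U' tAA_entry !col_replace.
  case: (eqVneq i k) => [->|ik]; case: (eqVneq j k) => [->|jk].
  - by rewrite WuWu !mxE !eqxx.
  - rewrite ?eqxx ?(negPf jk) [RHS]mxE eq_sym (negPf jk).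
    have := orth (W *m u) (ex_intro _ u erefl) j jk.
    by move=> /(congr1 trmx); rewrite trmx_mul trmxK trmx0 => ->; rewrite mxE.
  - rewrite ?eqxx ?(negPf ik) [RHS]mxE (negPf ik).
    by rewrite (orth (W *m u) (ex_intro _ u erefl) i ik) mxE.
  - by rewrite ?(negPf ik) ?(negPf jk) -tAA_entry hU.
move=> x hx.
have xx : (x^T *m x) 0 0 = 1.
  have := congr1 (fun X : 'M[R]_n => X k k) hx.
  by rewrite /= tAA_entry !col_replace eqxx => ->; rewrite mxE eqxx.
have hxo : forall j, j != k -> (col j (Ud r))^T *m x = 0.
  move=> j jk; have := congr1 (fun X : 'M[R]_n => X j k) hx.
  rewrite /= tAA_entry !col_replace eqxx ifN // => h1.
  have h0 : ((col j (Ud r))^T *m x) 0 0 = 0 by rewrite h1 mxE (negPf jk).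
  by rewrite [LHS]mx11_scalar h0; apply/matrixP=> a b; rewrite !mxE mul0rn.
have [y xE] := (hspan x).2 hxo.
rewrite xE !qW.
have yy : (y^T *m y) 0 0 = 1.
  by rewrite -xx xE trmx_mul mulmxA -(mulmxA _ W^T) hW mulmx1.
have h := @psd_min R _ M lam Msym hmin y; rewrite yy mulr1 in h.
have -> : (u^T *m M *m u) 0 0 = lam.
  by rewrite -mulmxA hMu -scalemxAr hu [LHS]mxE mxE eqxx mulr1.
exact: h.
Qed.
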